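(* Let $(\mathfrak g,[\cdot,\cdot]_{\mathfrak g},E)$ be an ENL algebra and $r\in\mathfrak g\otimes\mathfrak g$. Assume that the cobracket $\Delta_r(x)=(\mathrm{ad}_x\otimes\mathrm{Id}+\mathrm{Id}\otimes\mathrm{ad}_x)(r)$ endows $(\mathfrak g,\mathfrak g^* )$ with a coboundary Lie bialgebra structure, where the bracket on $\mathfrak g^*$ is $\langle[\alpha,\beta]_{\mathfrak g^*},x\rangle=\langle\alpha\otimes\beta,\Delta_r(x)\rangle$. Then $(\mathfrak g^*,[\cdot,\cdot]_{\mathfrak g^*},E^* )$ is an ENL algebra if and only if for all $x\in\mathfrak g$, $(\mathrm{ad}_{Ex}\otimes\mathrm{Id}+\mathrm{Id}\otimes\mathrm{ad}_{Ex})(r)=(E\otimes\mathrm{Id})(\mathrm{ad}_x\otimes\mathrm{Id}+\mathrm{Id}\otimes\mathrm{ad}_x)(r)$.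
   Context: Vector spaces are finite-dimensional over an algebraically closed field of characteristic zero. An ENL algebra $(\mathfrak g,[\cdot,\cdot],E)$ is a Lie algebra with linear $E$ satisfying $E[x,y]=[x,Ey]$ for all $x,y$ (equivalently $E[x,y]=[Ex,y]$). $E^*$ denotes the dual map of $E$. *)

(* Defs.v *)
From HB Require Import structures.
From mathcomp Require Import all_boot all_order all_algebra.
Set Implicit Arguments. Unset Strict Implicit. Unset Printing Implicit Defensive.
Import GRing.Theory.
Local Open Scope ring_scope.

(* Coordinates: g = F^n as row vectors 'rV[F]_n with standard basis e_i = delta_mx 0 i;
   g^* is identified with 'rV[F]_n via the dual basis, pairing <a, x> = sum_i a_i x_i.
   A linear map A : 'M_n acts on row vectors by x |-> x *m A; its dual map A^* acts
   (in the dual basis) by a |-> a *m A^T.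
   An element of g (x) g is a matrix T : 'M_n, T = sum_{i,j} T i j e_i (x) e_j. *)

Section Defs.
Variables (F : fieldType) (n : nat).
Notation V := 'rV[F]_n.

Definition is_lie (br : V -> V -> V) : Prop :=
  [/\ (forall (a : F) x y z, br (a *: x + y) z = a *: br x z + br y z),
      (forall (a : F) x y z, br x (a *: y + z) = a *: br x y + br x z),
      (forall x, br x x = 0) &
      (forall x y z, br x (br y z) + br y (br z x) + br z (br x y) = 0)].

Definition is_ENL (br : V -> V -> V) (E : 'M[F]_n) : Prop :=
  is_lie br /\ forall x y, br x y *m E = br x (y *m E).

Definition dualmx (E : 'M[F]_n) : 'M[F]_n := E^T.

Definition adm (br : V -> V -> V) (x : V) : 'M[F]_n :=
  \matrix_(i, j) (br x (delta_mx 0 i)) 0 j.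

(* (A (x) B)(T) *)
Definition tmap (A B T : 'M[F]_n) : 'M[F]_n := A^T *m T *m B.

Definition cobr (br : V -> V -> V) (r : 'M[F]_n) (x : V) : 'M[F]_n :=
  tmap (adm br x) 1%:M r + tmap 1%:M (adm br x) r.

(* <a (x) b, T> *)
Definition tpair (a b : V) (T : 'M[F]_n) : F := (a *m T *m b^T) 0 0.

Definition dbr (br : V -> V -> V) (r : 'M[F]_n) (a b : V) : V :=
  \row_j tpair a b (cobr br r (delta_mx 0 j)).

Definition is_coboundary_lie_bialgebra (br : V -> V -> V) (r : 'M[F]_n) : Prop :=
  is_lie (dbr br r) /\
  forall x y, cobr br r (br x y) =
    (tmap (adm br x) 1%:M (cobr br r y) + tmap 1%:M (adm br x) (cobr br r y))
  - (tmap (adm br y) 1%:M (cobr br r x) + tmap 1%:M (adm br y) (cobr br r x)).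

End Defs.

(* Main.v *)
Require Import Defs.
From mathcomp Require Import all_boot all_order all_algebra.
Local Open Scope ring_scope.
Import GRing.Theory.

Section Aux.
Variables (F : fieldType) (n : nat) (br : 'rV[F]_n -> 'rV[F]_n -> 'rV[F]_n) (r : 'M[F]_n).
Hypothesis lin1 : forall (a : F) x y z, br (a *: x + y) z = a *: br x z + br y z.

Lemma adm_lin a x y : adm br (a *: x + y) = a *: adm br x + adm br y.
Proof. by apply/matrixP=> i j; rewrite !mxE lin1 !mxE. Qed.

Lemma cobr_lin a x y : cobr br r (a *: x + y) = a *: cobr br r x + cobr br r y.
Proof.
rewrite /cobr /tmap adm_lin linearD /= linearZ /= !mulmxDl !mulmxDr.
rewrite -!scalemxAl -!scalemxAr.
by rewrite scalerDr addrACA.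
Qed.

Lemma cobr0 : cobr br r 0 = 0.
Proof.
have := cobr_lin (-1) 0 0; rewrite scaler0 addr0 scaleN1r => h.
by rewrite addNr in h.
Qed.

Lemma cobr_sum (c : 'I_n -> F) (v : 'I_n -> 'rV[F]_n) :
  cobr br r (\sum_k c k *: v k) = \sum_k c k *: cobr br r (v k).
Proof.
elim/big_rec2: _ => [|k u w _ <-]; first exact: cobr0.
by rewrite -cobr_lin.
Qed.
End Aux.

Lemma tpair_sum (F : fieldType) n (a b : 'rV[F]_n) (c : 'I_n -> F) (M : 'I_n -> 'M[F]_n) :
  tpair a b (\sum_k c k *: M k) = \sum_k c k * tpair a b (M k).
Proof.
rewrite /tpair; elim/big_rec2: _ => [|k u w _ <-].
  by rewrite mulmx0 mul0mx mxE.
by rewrite mulmxDr mulmxDl -scalemxAr -scalemxAl !mxE.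
Qed.

Lemma tpair_delta (F : fieldType) n (i j : 'I_n) (M : 'M[F]_n) :
  tpair (delta_mx 0 i) (delta_mx 0 j) M = M i j.
Proof. by rewrite /tpair -rowE trmx_delta -colE !mxE. Qed.

Theorem proposition5p4 (F : closedFieldType) (n : nat)
  (br : 'rV[F]_n -> 'rV[F]_n -> 'rV[F]_n) (E r : 'M[F]_n) :
  [pchar F] =i pred0 ->
  is_ENL br E ->
  is_coboundary_lie_bialgebra br r ->
  (is_ENL (dbr br r) (dualmx E) <->
   forall x : 'rV[F]_n, cobr br r (x *m E) = tmap E 1%:M (cobr br r x)).
Proof.
move=> _ [[lin1 _ _ _] _] [Ld _].
set D := cobr br r.
have Dsum := @cobr_sum _ _ br r lin1.
have [dl1 dl2 dal _] := Ld.
have anti : forall a b, dbr br r a b = - dbr br r b a.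
  move=> a b; apply/eqP; rewrite -subr_eq0 opprK.
  have L1 z w u : dbr br r (z + w) u = dbr br r z u + dbr br r w u.
    by rewrite -[z]scale1r dl1 !scale1r.
  have L2 z w u : dbr br r u (z + w) = dbr br r u z + dbr br r u w.
    by rewrite -[z]scale1r dl2 !scale1r.
  have := dal (a + b); rewrite L1 !L2 !dal add0r addr0 => <-.
  by rewrite addrC.
have I1 : forall a b k, (dbr br r a b *m dualmx E) 0 k
     = tpair a b (D (delta_mx 0 k *m E)).
  move=> a b k; rewrite /D [delta_mx 0 k *m E]row_sum_delta -rowE Dsum tpair_sum mxE.
  by apply: eq_bigr => j _; rewrite !mxE mulrC.
have I2 : forall a b k, (dbr br r (a *m dualmx E) b) 0 k
     = tpair a b (E^T *m D (delta_mx 0 k)).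
  by move=> a b k; rewrite mxE /tpair /dualmx !mulmxA.
have QP0 : (forall a b, dbr br r a b *m dualmx E = dbr br r (a *m dualmx E) b)
    <-> (forall k, D (delta_mx 0 k *m E) = E^T *m D (delta_mx 0 k)).
  split.
    move=> Q k; apply/matrixP=> i j.
    by rewrite -!(@tpair_delta _ _ i j) -I1 -I2 Q.
  move=> P a b; apply/rowP=> k; by rewrite I1 I2 P.
have P0P : (forall k, D (delta_mx 0 k *m E) = E^T *m D (delta_mx 0 k))
    <-> (forall x, D (x *m E) = tmap E 1%:M (D x)).
  split; last by move=> P k; rewrite P /tmap mulmx1.
  move=> P x; rewrite /D /tmap mulmx1 {1 2}[x]row_sum_delta mulmx_suml.
  under eq_bigr => i _ do rewrite -scalemxAl.
  rewrite !Dsum mulmx_sumr; apply: eq_bigr => k _.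
  by rewrite -/D P scalemxAr.
split.
  move=> [_ H]; apply/P0P/QP0 => a b.
  by rewrite anti mulNmx H -anti.
move=> P; split => // a b.
have Q := proj2 QP0 (proj2 P0P P).
by rewrite anti mulNmx Q -anti.
Qed.
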